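(* Let $X$ be a Tychonoff space. If player II has a winning strategy in the game $\mathsf{G}_1(\Omega, \Omega)$ played on $X$, then $X_\delta$ is Lindelöf.
   Context: $\Omega$ is the collection of all open $\omega$-covers of $X$, i.e., open covers $\mathcal{C}$ such that every finite $F \subset X$ is contained in some member of $\mathcal{C}$ (here taken, as usual, with $X \notin \mathcal{C}$ not required). The game $\mathsf{G}_1(\Omega,\Omega)$ is played in innings $n \in \omega$: player I chooses $\mathcal{C}_n \in \Omega$, then player II chooses $C_n \in \mathcal{C}_n$; II wins iff $\{C_n : n \in \omega\} \in \Omega$. $X_\delta$, the $G_\delta$ modification of $X$, is the set $X$ with the topology generated by the $G_\delta$ subsets of $X$. *)

(* Defs.v *)
From HB Require Import structures.
From mathcomp Require Import all_boot all_order all_algebra.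
From mathcomp Require Import all_classical all_reals all_analysis borel_hierarchy.
Set Implicit Arguments. Unset Strict Implicit. Unset Printing Implicit Defensive.
Import Order.TTheory GRing.Theory Num.Theory.
Local Open Scope classical_set_scope.

(* Tychonoff = completely regular (library notion, urysohn.v) + T1
   (library [accessible_space]). *)
Definition tychonoff_space (X : topologicalType) : Prop :=
  completely_regular_space X /\ accessible_space X.

(* Open omega-covers of X: families of open sets such that every finite
   subset of X is contained in some member (X itself may be a member). *)
Definition omega_cover (X : topologicalType) (C : set (set X)) : Prop :=
  (forall U, C U -> open U) /\
  (forall F : set X, finite_set F -> exists2 U, C U & F `<=` U).

(* A strategy for player II in G_1(Omega, Omega): given the finite sequence
   of covers C_0, ..., C_n played so far by I, choose a set. *)
Definition II_strategy (X : topologicalType) := seq (set (set X)) -> set X.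

Definition II_winning (X : topologicalType) (sigma : II_strategy X) : Prop :=
  (forall (s : seq (set (set X))) (C : set (set X)),
      (forall i, (i < size s)%N -> omega_cover (nth set0 s i)) ->
      omega_cover C -> C (sigma (rcons s C))) /\
  (forall Cs : nat -> set (set X), (forall n, omega_cover (Cs n)) ->
      omega_cover (range (fun n => sigma [seq Cs i | i <- iota 0 n.+1]))).

Definition II_has_winning_strategy (X : topologicalType) : Prop :=
  exists sigma : II_strategy X, II_winning sigma.

(* The G_delta modification X_delta: the topology on (the points of) X
   generated by the G_delta subsets of X, i.e. its open sets are the unions
   of finite intersections of G_delta subsets of X. *)
Definition finite_Gdelta_inter (X : topologicalType) (B : set X) : Prop :=
  exists (n : nat) (H : 'I_n -> set X),
    (forall k, Gdelta (H k)) /\ B = \bigcap_(k in [set: 'I_n]) H k.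

Definition delta_open (X : topologicalType) (A : set X) : Prop :=
  exists G : set (set X),
    (forall B, G B -> finite_Gdelta_inter B) /\ A = \bigcup_(B in G) B.

Definition delta_lindelof (X : topologicalType) : Prop :=
  forall C : set (set X), (forall U, C U -> delta_open U) ->
    [set: X] `<=` \bigcup_(U in C) U ->
    exists2 D : set (set X), D `<=` C /\ countable D &
      [set: X] `<=` \bigcup_(U in D) U.

(* Main.v *)
Require Import Defs.
From mathcomp Require Import all_boot all_order all_algebra.
From mathcomp Require Import all_classical all_reals all_analysis.

Local Open Scope classical_set_scope.

Definition valid_pos {X : topologicalType} (s : seq (set (set X))) :=
  forall i, (i < size s)%N -> omega_cover (nth set0 s i).

Lemma valid_rcons (X : topologicalType) (s : seq (set (set X))) C :
  valid_pos s -> omega_cover C -> valid_pos (rcons s C).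
Proof.
move=> vs oC i; rewrite size_rcons ltnS leq_eqVlt => /orP[/eqP->|lt].
  by rewrite nth_rcons ltnn eqxx.
by rewrite nth_rcons lt; apply: vs.
Qed.

Lemma lemA (X : topologicalType) (sigma : II_strategy X) :
  II_winning sigma -> forall s, valid_pos s ->
  exists2 F : set X, finite_set F &
    forall U, open U -> F `<=` U ->
      exists2 C, omega_cover C & sigma (rcons s C) = U.
Proof.
move=> [leg _] s vs; apply: contrapT => H.
pose D := [set U : set X | open U /\ forall C, omega_cover C -> sigma (rcons s C) <> U].
have oD : omega_cover D.
  split; first by move=> U [].
  move=> F fF; apply: contrapT => nF; apply: H; exists F => // U oU FU.
  apply: contrapT => nC; apply: nF; exists U => //; split => // C oC e.
  by apply: nC; exists C.
by have [_ /(_ D oD)] := leg s D vs oD; apply.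
Qed.

Lemma open_fincap (X : topologicalType) (I : choiceType) (A : set I)
  (F : I -> set X) : finite_set A -> (forall i, open (F i)) ->
  open (\bigcap_(i in A) F i).
Proof.
move=> fA oF; rewrite -bigsetI_fset_set //.
by apply: (big_ind (fun B => open B)) => //; [exact: openT| exact: openI].
Qed.

Lemma lemB (X : topologicalType) (C : set (set X)) :
  (forall U, C U -> delta_open U) -> [set: X] `<=` \bigcup_(U in C) U ->
  forall y : X, exists UQ : set X * (nat -> set X),
    [/\ C UQ.1, (forall n, open (UQ.2 n)), (forall n, UQ.2 n y),
        (forall n m, (n <= m)%N -> UQ.2 m `<=` UQ.2 n) &
        \bigcap_n UQ.2 n `<=` UQ.1].
Proof.
move=> oC cov y; have [U CU Uy] := cov y I.
have [G [GB eU]] := oC U CU.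
have := Uy; rewrite eU => -[B GBB By].
have [m [H [Hd eB]]] := GB B GBB.
have : forall k : 'I_m, exists Os : nat -> set X,
    (forall i, open (Os i)) /\ H k = \bigcap_i Os i.
  by move=> k; have [Os oO e] := Hd k; exists Os.
move=> /choice [Os HO].
pose Q n := \bigcap_(k in [set: 'I_m]) \bigcap_(i in `I_n.+1) Os k i.
exists (U, Q); split => //=.
- move=> n; apply: open_fincap; first exact: finite_finset.
  by move=> k; apply: open_fincap; [exact: finite_II| move=> i; case: (HO k)].
- move=> n k _ i _; have := By; rewrite eB => /(_ k I).
  by case: (HO k) => _ ->; apply.
- move=> n p np z Qz k _ i /= ilt; apply: (Qz k I i) => /=.
  by apply: leq_trans ilt _; rewrite ltnS.
- move=> z Qz; rewrite eU; exists B => //; rewrite eB => k _.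
  case: (HO k) => _ -> i _; exact: (Qz i I k I i (ltnSn i)).
Qed.

Lemma fin_max (T : choiceType) (F : set T) (P : T -> nat -> Prop) :
  finite_set F -> (forall y n m, (n <= m)%N -> P y n -> P y m) ->
  (forall y, F y -> exists n, P y n) -> exists n, forall y, F y -> P y n.
Proof.
move=> fF mP hF.
suff : forall s : seq T, (forall y, y \in s -> exists n, P y n) ->
    exists n, forall y, y \in s -> P y n.
  move=> /(_ (finmap.enum_fset (fset_set F))) [].
    by move=> y; rewrite in_fset_set // inE; apply: hF.
  move=> n Hn; exists n => y Fy; apply: Hn.
  by rewrite in_fset_set // inE.
elim=> [|a s IH] H; first by exists 0%N.
have [na Pa] := H a (mem_head _ _).
have [ns Ps] : exists n, forall y, y \in s -> P y n.
  by apply: IH => y ys; apply: H; rewrite in_cons ys orbT.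
exists (maxn na ns) => y; rewrite in_cons => /orP[/eqP->|ys].
  by apply: mP Pa; rewrite leq_maxl.
by apply: mP (Ps y ys); rewrite leq_maxr.
Qed.

Theorem proposition3p5 (X : topologicalType) :
  tychonoff_space X -> II_has_winning_strategy X -> delta_lindelof X.
Proof.
move=> _ [sigma win] C oC cov.
have hA := @lemA X sigma win.
have : forall s : seq (set (set X)), exists F : set X,
    finite_set F /\ (valid_pos s -> forall U, open U -> F `<=` U ->
      exists2 C, omega_cover C & sigma (rcons s C) = U).
  move=> s; case: (pselect (valid_pos s)) => vs.
    by have [F fF HF] := hA s vs; exists F.
  by exists set0; split; [exact: finite_set0|].
move=> /choice [Fs HFs].
have /choice [UQ HUQ] := @lemB X C oC cov.
pose V s n := \bigcup_(y in Fs s) (UQ y).2 n.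
have : forall sn : seq (set (set X)) * nat, exists C',
    valid_pos sn.1 -> omega_cover C' /\ sigma (rcons sn.1 C') = V sn.1 sn.2.
  move=> [s n] /=; case: (pselect (valid_pos s)) => vs; last first.
    by exists set0.
  have [_ H] := HFs s.
  have oV : open (V s n) by apply: bigcup_open => y _; case: (HUQ y).
  have sV : Fs s `<=` V s n by move=> y Fy; exists y => //; case: (HUQ y).
  have [C' oC' e] := H vs (V s n) oV sV.
  by exists C'.
move=> /choice [Cn HCn].
pose pos (t : seq nat) := foldl (fun s n => rcons s (Cn (s, n))) [::] t.
have posr t n : pos (rcons t n) = rcons (pos t) (Cn (pos t, n)).
  by rewrite /pos foldl_rcons.
have vpos t : valid_pos (pos t).
  elim/last_ind: t => [|t n IH]; first by move=> i.
  rewrite posr; apply: valid_rcons => //; exact: (HCn (pos t, n) IH).1.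
exists (\bigcup_(t in [set: seq nat]) (fun y => (UQ y).1) @` Fs (pos t)).
  split.
    by move=> U [t _ [y _ <-]]; case: (HUQ y).
  apply: bigcup_countable; first exact: countableP.
  move=> t _; apply: finite_set_countable; apply: finite_image.
  exact: (HFs (pos t)).1.
move=> x _; apply: contrapT => nx.
have : forall t : seq nat, exists n, ~ V (pos t) n x.
  move=> t.
  have [n Hn] : exists n, forall y, Fs (pos t) y -> ~ (UQ y).2 n x.
    apply: fin_max; first exact: (HFs (pos t)).1.
      move=> y n m nm Hn Hm; apply: Hn.
      by case: (HUQ y) => _ _ _ /(_ n m nm) + _; apply.
    move=> y Fy; apply: contrapT => H; apply: nx.
    exists (UQ y).1; first by exists t => //; exists y.
    case: (HUQ y) => _ _ _ _; apply => i _.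
    by apply: contrapT => Hi; apply: H; exists i.
  by exists n => -[y Fy Qy]; apply: (Hn y Fy).
move=> /choice [g Hg].
pose tk k := iter k (fun t => rcons t (g t)) [::].
pose Cs k := Cn (pos (tk k), g (tk k)).
have eqpos k : pos (tk k) = [seq Cs i | i <- iota 0 k].
  elim: k => [//|k IH].
  rewrite /tk iterS -/(tk k) posr -/(Cs k) IH.
  by rewrite -addn1 iotaD map_cat cats1.
have oCs k : omega_cover (Cs k) by exact: (HCn (pos (tk k), g (tk k)) (vpos _)).1.
have [_ /(_ [set x] (finite_set1 x))] := (win.2 Cs oCs).
move=> [U [n _ <-]] /(_ x erefl).
rewrite -eqpos /tk iterS -/(tk n) posr.
by rewrite (HCn (pos (tk n), g (tk n)) (vpos _)).2; apply: Hg.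
Qed.
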